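(* Let $d\ge 1$, let $\eta\in\mathcal{X}=\mathbb{N}^{\mathbb{Z}^d}$, and let $T,T'$ be two legal toppling procedures which are both finite for the initial configuration $\eta$. Then: 1. If $T$ is stabilizing for $\eta$, then $T'\preceq_\eta T$, i.e. $T'(\infty,x,\eta)\le T(\infty,x,\eta)$ for all $x\in\mathbb{Z}^d$. 2. If $T$ and $T'$ are both stabilizing for $\eta$, then $T'(\infty,x,\eta)=T(\infty,x,\eta)$ for all $x\in\mathbb{Z}^d$; in particular, for stabilizable $\eta$ the limit configuration $\eta_\infty=\eta-\Delta T(\infty,\cdot,\eta)$ does not depend on the choice of stabilizing legal toppling procedure. 3. If $\eta$ is stabilizable, then there does not exist a legal toppling procedure that is not finite for $\eta$. 4. If $T$ is stabilizing for $\eta$, then there is at least one site $x\in\mathbb{Z}^d$ with $T(\infty,x,\eta)=0$.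
   Context: Let $\mathcal{X}=\mathbb{N}^{\mathbb{Z}^d}$ be the set of height configurations; a configuration $\eta$ is stable if $\eta(x)\le 2d-1$ for all $x$, and site $x$ is unstable if $\eta(x)\ge 2d$. The toppling matrix is $\Delta_{x,y}=2d\mathbf{1}_{x=y}-\mathbf{1}_{|x-y|=1}$, and for $n:\mathbb{Z}^d\to\mathbb{N}$ we write $(\Delta n)(x)=\sum_y\Delta_{x,y}n(y)$. A toppling procedure is a measurable map $T:[0,\infty)\times\mathbb{Z}^d\times\mathcal{X}\to\mathbb{N}$ such that for every $\eta\in\mathcal{X}$: (a) $T(0,x,\eta)=0$ for all $x$; (b) for each $x$, $t\mapsto T(t,x,\eta)$ is right-continuous, nondecreasing, with jumps of size at most one; (c) for each $x$, there are finitely many jumps at $x$ in every finite time interval; (d) there is no infinite chain of topplings at sites $x_1,x_2,\dots$ occurring at times $t_1>t_2>\cdots$ with $x_{i+1}$ a neighbor of $x_i$ for all $i$. ($T(t,x,\eta)$ is the number of topplings at $x$ during $[0,t]$; site $x$ topples at time $t$ if $T(t-,x,\eta)<T(t,x,\eta)$.) The configuration at time $t$ is $\eta_t=\eta-\Delta T(t,\cdot,\eta)$. $T$ is legal if for all $\eta$, all $t>0$ and all $x$ toppling at time $t$, $\eta_{t-}(x)\ge 2d$. $T$ is finite for $\eta$ if $T(\infty,x,\eta):=\lim_{t\to\infty}T(t,x,\eta)<\infty$ for all $x$. A legal $T$ is stabilizing for $\eta$ if it is finite for $\eta$ and $\eta_\infty:=\eta-\Delta T(\infty,\cdot,\eta)$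 is stable. A configuration $\eta$ is stabilizable if there exists a legal toppling procedure that is stabilizing for $\eta$. *)

(* Defs.v *)
From Stdlib Require Import Reals.
From mathcomp Require Import all_boot all_order all_algebra.
Set Implicit Arguments. Unset Strict Implicit. Unset Printing Implicit Defensive.
Import Order.TTheory GRing.Theory Num.Theory.

Definition site (d : nat) := {ffun 'I_d -> int}.
Definition config (d : nat) := site d -> nat.

Definition shift d (x : site d) (i : 'I_d) (k : int) : site d :=
  [ffun j => (x j + (j == i)%:R * k)%R].

Definition adj d (x y : site d) : Prop := (\sum_(i < d) `|(x i - y i)%R|)%N = 1%N.

Definition nb_sum d (n : site d -> nat) (x : site d) : nat :=
  \sum_(i < d) (n (shift x i 1) + n (shift x i (-1))).

Definition laplacian d (n : site d -> nat) (x : site d) : int :=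
  ((2 * d * n x)%:Z - (nb_sum n x)%:Z)%R.

Definition after d (eta : config d) (n : site d -> nat) (x : site d) : int :=
  ((eta x)%:Z - laplacian n x)%R.

Definition stable d (c : site d -> int) : Prop :=
  forall x, (c x <= (2 * d - 1)%:Z)%R.

Definition procedure d := R -> site d -> config d -> nat.

Definition left_lim (f : R -> nat) (t : R) (L : nat) : Prop :=
  forall eps : R, Rlt 0 eps -> exists delta : R, Rlt 0 delta /\
    forall s : R, Rle 0 s -> Rlt (Rminus t delta) s -> Rlt s t ->
      Rlt (Rabs (Rminus (INR (f s)) (INR L))) eps.

Definition lim_infty (f : R -> nat) (L : nat) : Prop :=
  forall eps : R, Rlt 0 eps -> exists M : R,
    forall s : R, Rle M s -> Rlt (Rabs (Rminus (INR (f s)) (INR L))) eps.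

Definition topples d (T : procedure d) (eta : config d) (t : R) (x : site d) : Prop :=
  Rlt 0 t /\ exists L : nat, left_lim (fun s => T s x eta) t L /\ (L < T t x eta)%N.

(* Toppling procedure (measurability omitted) *)
Definition toppling_procedure d (T : procedure d) : Prop :=
  forall eta : config d,
  (forall x, T R0 x eta = 0%N) /\
  (forall x (s t : R), Rle 0 s -> Rle s t -> (T s x eta <= T t x eta)%N) /\
  (forall x (t : R), Rle 0 t -> forall eps : R, Rlt 0 eps ->
     exists delta : R, Rlt 0 delta /\ forall s : R, Rle t s -> Rlt s (Rplus t delta) ->
       Rlt (Rabs (Rminus (INR (T s x eta)) (INR (T t x eta)))) eps) /\
  (forall x (t : R) (L : nat), Rlt 0 t -> left_lim (fun s => T s x eta) t L ->
     (T t x eta <= L + 1)%N) /\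
  (forall x (b : R), exists ts : seq R,
     forall t : R, Rle t b -> topples T eta t x -> List.In t ts) /\
  ~ (exists (xs : nat -> site d) (ts : nat -> R),
       forall i : nat, topples T eta (ts i) (xs i) /\ Rlt (ts i.+1) (ts i)
                       /\ adj (xs i) (xs i.+1)).

Definition config_at d (T : procedure d) (eta : config d) (t : R) : site d -> int :=
  after eta (fun x => T t x eta).

Definition legal d (T : procedure d) : Prop :=
  forall (eta : config d) (t : R) (x : site d) (L : site d -> nat),
    Rlt 0 t ->
    (forall y, left_lim (fun s => T s y eta) t (L y)) ->
    (L x < T t x eta)%N ->
    ((2 * d)%:Z <= after eta L x)%R.

Definition final_counts d (T : procedure d) (eta : config d) (N : site d -> nat) : Prop :=
  forall x, lim_infty (fun s => T s x eta) (N x).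

Definition finite_for d (T : procedure d) (eta : config d) : Prop :=
  forall x, exists n : nat, lim_infty (fun s => T s x eta) n.

Definition stabilizing_for d (T : procedure d) (eta : config d) : Prop :=
  legal T /\ finite_for T eta /\
  forall N, final_counts T eta N -> stable (after eta N).

Definition stabilizable d (eta : config d) : Prop :=
  exists T : procedure d, toppling_procedure T /\ legal T /\ stabilizing_for T eta.

(* Main.v *)
Require Import Defs.
From Stdlib Require Import Reals.
From mathcomp Require Import all_boot all_order all_algebra.
From Stdlib Require Import Lra ClassicalEpsilon Classical FunctionalExtensionality.
From mathcomp Require Import zify.
Set Implicit Arguments. Unset Strict Implicit.
Import Order.TTheory GRing.Theory Num.Theory.
Lemma nat_close (a b : nat) : Rlt (Rabs (Rminus (INR a) (INR b))) 1 -> a = b.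
Proof.
move=> H; case: (ltngtP a b) => // hab; exfalso.
- have : (a.+1 <= b)%coq_nat by apply/ssrnat.leP.
  move/le_INR; rewrite S_INR => h.
  move: H; rewrite Rabs_left1; lra.
- have : (b.+1 <= a)%coq_nat by apply/ssrnat.leP.
  move/le_INR; rewrite S_INR => h.
  move: H; rewrite Rabs_right; lra.
Qed.

Lemma max_nat (Q : nat -> Prop) n : Q 0%N -> ~ Q n -> exists k, Q k /\ ~ Q k.+1.
Proof.
elim: n => [//|n IH] Q0 Qn.
case: (classic (Q n)) => Hn; first by exists n.
exact: IH.
Qed.

Lemma in_window (t del : R) : Rlt 0 t -> Rlt 0 del ->
  exists s, Rle 0 s /\ Rlt (Rminus t del) s /\ Rlt s t.
Proof.
move=> ht hd; exists (Rminus t (Rdiv (Rmin del t) 2)).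
have h1 := Rmin_l del t; have h2 := Rmin_r del t.
have h3 : Rlt 0 (Rmin del t) by apply: Rmin_glb_lt.
split; [|split]; lra.
Qed.

Section F.
Variable f : R -> nat.
Hypothesis mono : forall s t, Rle 0 s -> Rle s t -> (f s <= f t)%N.

Lemma leftlim_ex t : Rlt 0 t -> exists L, left_lim f t L.
Proof.
move=> ht.
pose Q k := exists s, Rle 0 s /\ Rlt s t /\ (k <= f s)%N.
have Q0 : Q 0%N by exists R0; split; [lra|split; [lra|]].
have Qn : ~ Q (f t).+1.
  move=> [s [h1 [h2 h3]]]; have := mono h1 (Rlt_le _ _ h2); lia.
have [k [[s0 [hs0 [hs0t hk]]] nk]] := max_nat Q0 Qn.
exists k => eps he; exists (Rminus t s0); split; first lra.
move=> s h1 h2 h3.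
have e : f s = k.
  have := mono hs0 (Rlt_le s0 s ltac:(lra)).
  have : ~ (k.+1 <= f s)%N by move=> hh; apply: nk; exists s; split; [|split].
  lia.
by rewrite e Rminus_diag Rabs_R0.
Qed.

Lemma leftlim_eq t L : left_lim f t L -> exists del, Rlt 0 del /\
  forall s, Rle 0 s -> Rlt (Rminus t del) s -> Rlt s t -> f s = L.
Proof.
move=> H; have [del [hd hs]] := H R1 Rlt_0_1.
exists del; split=> // s h1 h2 h3; apply: nat_close; exact: hs.
Qed.

Lemma leftlim_uniq t L1 L2 : Rlt 0 t -> left_lim f t L1 -> left_lim f t L2 -> L1 = L2.
Proof.
move=> ht /leftlim_eq [d1 [hd1 H1]] /leftlim_eq [d2 [hd2 H2]].
have [s [h1 [h2 h3]]] := in_window ht (Rmin_glb_lt _ _ _ hd1 hd2).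
have := Rmin_l d1 d2; have := Rmin_r d1 d2 => m2 m1.
rewrite -(H1 s) //; last lra.
rewrite -(H2 s) //; lra.
Qed.

Hypothesis f0 : f R0 = 0%N.
Hypothesis rc : forall (t : R), Rle 0 t -> forall eps : R, Rlt 0 eps ->
     exists delta : R, Rlt 0 delta /\ forall s : R, Rle t s -> Rlt s (Rplus t delta) ->
       Rlt (Rabs (Rminus (INR (f s)) (INR (f t)))) eps.
Hypothesis jump : forall (t : R) (L : nat), Rlt 0 t -> left_lim f t L -> (f t <= L + 1)%N.

Lemma rc_eq t : Rle 0 t -> exists del, Rlt 0 del /\
   forall s, Rle t s -> Rlt s (Rplus t del) -> f s = f t.
Proof.
move=> ht; have [del [hd hs]] := rc ht Rlt_0_1.
exists del; split=> // s h1 h2; apply: nat_close; exact: hs.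
Qed.

Lemma first_exceed K t : Rle 0 t -> (K < f t)%N ->
  exists tau, Rlt 0 tau /\ Rle tau t /\ left_lim f tau K /\ (K < f tau)%N.
Proof.
move=> ht hK.
pose A s := Rle 0 s /\ (f s <= K)%N.
have bA : bound A.
  exists t => a [ha1 ha2]; apply: Rnot_lt_le => hat.
  have := mono ht (Rlt_le _ _ hat); lia.
have eA : exists a, A a by exists R0; split; [lra|rewrite f0].
have [tau [ub lub]] := completeness A bA eA.
have taut : Rle tau t.
  apply: lub => a [ha1 ha2]; apply: Rnot_lt_le => hat.
  have := mono ht (Rlt_le _ _ hat); lia.
have [d0 [hd0 H0]] := rc_eq (Rle_refl R0).
have taupos : Rlt 0 tau.
  have : A (Rdiv d0 2).
    split; first lra.
    rewrite H0 ?f0 //; lra.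
  move/ub; lra.
have after_tau : forall s, Rlt tau s -> (K < f s)%N.
  move=> s hs; case: (leqP (f s) K) => // hh; exfalso.
  have : A s by split; [lra|].
  move/ub; lra.
have before_tau : forall s, Rle 0 s -> Rlt s tau -> (f s <= K)%N.
  move=> s h0 hs.
  case: (classic (exists a, A a /\ Rlt s a)) => [[a [[ha1 ha2] hsa]]|hn].
    have := mono h0 (Rlt_le _ _ hsa); lia.
  have : Rle tau s.
    apply: lub => a ha; apply: Rnot_lt_le => hsa; apply: hn; by exists a.
  lra.
have [d1 [hd1 H1]] := rc_eq (Rlt_le _ _ taupos).
have Kt : (K < f tau)%N.
  rewrite -(H1 (Rplus tau (Rdiv d1 2))); try lra.
  apply: after_tau; lra.
have [L HL] := leftlim_ex taupos.
have [d2 [hd2 H2]] := leftlim_eq HL.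
have [s [h1 [h2 h3]]] := in_window taupos hd2.
have LK : (L <= K)%N by rewrite -(H2 s) //; apply: before_tau.
have := jump taupos HL => hj.
have eL : L = K by lia.
exists tau; split=> //; split=> //; split=> //; by rewrite -eL.
Qed.
End F.
Lemma adj_shift d (y : site d) i (k : int) : (k = 1 \/ k = -1)%R -> adj y (shift y i k).
Proof.
move=> hk; rewrite /adj (bigD1 i) //= big1 ?addn0.
  rewrite ffunE eqxx mul1r opprD addrA subrr add0r abszN.
  by case: hk => ->.
move=> j hj; rewrite ffunE (negbTE hj) mul0r addr0 subrr //.
Qed.

Section LA.
Variables (d : nat) (eta : config d) (T' : procedure d) (N : site d -> nat).
Hypothesis dpos : (0 < d)%N.
Hypothesis HT : toppling_procedure T'.
Hypothesis HL : legal T'.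
Hypothesis Hst : stable (after eta N).

Definition Good (p : site d * R) :=
  Rlt 0 p.2 /\ left_lim (fun s => T' s p.1 eta) p.2 (N p.1) /\ (N p.1 < T' p.2 p.1 eta)%N.

Lemma good_first x t : Rle 0 t -> (N x < T' t x eta)%N -> Good (x, t) \/ exists tau, Good (x, tau).
Proof.
move=> ht hN; right.
have [H0 [Hmono [Hrc [Hjump _]]]] := HT eta.
have [tau [h1 [h2 [h3 h4]]]] := first_exceed (f := fun s => T' s x eta)
  (fun s t => Hmono x s t) (H0 x) (Hrc x) (Hjump x) ht hN.
by exists tau.
Qed.

Lemma good_step p : Good p -> exists q, Good q /\ Rlt q.2 p.2 /\ adj p.1 q.1.
Proof.
case: p => y tau [/= htau [hly hNy]].
have [H0 [Hmono [Hrc [Hjump _]]]] := HT eta.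
have ex : forall z, exists L, left_lim (fun s => T' s z eta) tau L.
  move=> z; exact: (leftlim_ex (fun s t => Hmono z s t) htau).
pose Lf z := proj1_sig (constructive_indefinite_description _ (ex z)).
have HLf : forall z, left_lim (fun s => T' s z eta) tau (Lf z).
  move=> z; exact: (proj2_sig (constructive_indefinite_description _ (ex z))).
have eLy : Lf y = N y := leftlim_uniq htau (HLf y) hly.
have hleg := HL htau HLf (x := y).
rewrite eLy in hleg; have {}hleg := hleg hNy.
have hs := Hst y.
have hnb : (nb_sum N y < nb_sum Lf y)%N.
  move: hleg hs; rewrite /after /laplacian eLy.
  move: (eta y) (N y) (nb_sum N y) (nb_sum Lf y) => a b c e; lia.
have [i hi] : exists i, (N (shift y i 1) < Lf (shift y i 1))%N \/
                        (N (shift y i (-1)) < Lf (shift y i (-1)))%N.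
  apply: NNPP => hn; move: hnb; rewrite ltnNge; move/negP; apply.
  apply: leq_sum => i _; apply: leq_add; rewrite leqNgt; apply/negP => h;
    apply: hn; exists i; by [left|right].
have key : forall k, (k = 1 \/ k = -1)%R -> (N (shift y i k) < Lf (shift y i k))%N ->
    exists q, Good q /\ Rlt q.2 tau /\ adj y q.1.
  move=> k hk hlt; set z := shift y i k.
  have [del [hdel Hd]] := leftlim_eq (HLf z).
  have [s [s1 [s2 s3]]] := in_window htau hdel.
  have hz : (N z < T' s z eta)%N by rewrite Hd.
  have [tau' [h1 [h2 [h3 h4]]]] := first_exceed (f := fun s => T' s z eta)
    (fun s t => Hmono z s t) (H0 z) (Hrc z) (Hjump z) s1 hz.
  exists (z, tau'); split; first by split.
  split; [simpl; lra | exact: adj_shift].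
case: hi => hi; [apply: (key 1%R) | apply: (key (-1)%R)]; by [left|right|].
Qed.

Lemma least_action x t : Rle 0 t -> (T' t x eta <= N x)%N.
Proof.
move=> ht; rewrite leqNgt; apply/negP => hN.
have [H0 [Hmono [Hrc [Hjump [_ Hchain]]]]] := HT eta.
have [tau [h1 [h2 [h3 h4]]]] := first_exceed (f := fun s => T' s x eta)
  (fun s t => Hmono x s t) (H0 x) (Hrc x) (Hjump x) ht hN.
pose P := {p | Good p}.
have g0 : Good (x, tau) by [].
have st : forall p : P, exists q : P, Rlt (sval q).2 (sval p).2 /\ adj (sval p).1 (sval q).1.
  move=> [p gp]; have [q [gq hq]] := good_step gp; by exists (exist _ q gq).
pose F (p : P) := proj1_sig (constructive_indefinite_description _ (st p)).
have HF : forall p, Rlt (sval (F p)).2 (sval p).2 /\ adj (sval p).1 (sval (F p)).1.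
  move=> p; exact: (proj2_sig (constructive_indefinite_description _ (st p))).
pose sq n := iter n F (exist _ (x, tau) g0).
apply: Hchain; exists (fun n => (sval (sq n)).1), (fun n => (sval (sq n)).2) => n.
have [gg1 [gg2 gg3]] := proj2_sig (sq n).
split; first by split => //; exists (N (sval (sq n)).1).
by rewrite /sq iterS; apply: HF.
Qed.
End LA.
Lemma lim_eventually (f : R -> nat) L : lim_infty f L -> exists s, Rle 0 s /\ f s = L.
Proof.
move=> H; have [M HM] := H R1 Rlt_0_1.
exists (Rmax M 0); split; first exact: Rmax_r.
apply: nat_close; apply: HM; exact: Rmax_l.
Qed.

Lemma bounded_finite (f : R -> nat) B :
  (forall s t, Rle 0 s -> Rle s t -> (f s <= f t)%N) ->
  (forall s, Rle 0 s -> (f s <= B)%N) -> exists n, lim_infty f n.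
Proof.
move=> mono hB.
pose Q k := exists s, Rle 0 s /\ (k <= f s)%N.
have Q0 : Q 0%N by exists R0; split; [lra|].
have Qn : ~ Q B.+1 by move=> [s [h1 h2]]; have := hB s h1; lia.
have [k [[s0 [hs0 hk]] nk]] := max_nat Q0 Qn.
exists k => eps he; exists s0 => s hs.
have e : f s = k.
  have := mono _ _ hs0 hs.
  have : ~ (k.+1 <= f s)%N by move=> hh; apply: nk; exists s; split=> //; lra.
  lia.
by rewrite e Rminus_diag Rabs_R0.
Qed.

Lemma bound_by_stable d (eta : config d) (T' : procedure d) N N' :
  (0 < d)%N -> toppling_procedure T' -> legal T' -> stable (after eta N) ->
  final_counts T' eta N' -> forall x, (N' x <= N x)%N.
Proof.
move=> dp HT HL Hs Hf x.
have [s [hs e]] := lim_eventually (Hf x).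
rewrite -e; exact: least_action.
Qed.

Theorem theorem2p8 (d : nat) (eta : config d) (T T' : procedure d) :
  (0 < d)%N ->
  toppling_procedure T -> toppling_procedure T' ->
  legal T -> legal T' ->
  finite_for T eta -> finite_for T' eta ->
  (* 1 *)
  (stabilizing_for T eta ->
     forall N N', final_counts T eta N -> final_counts T' eta N' ->
       forall x, (N' x <= N x)%N) /\
  (* 2 *)
  (stabilizing_for T eta -> stabilizing_for T' eta ->
     forall N N', final_counts T eta N -> final_counts T' eta N' ->
       (forall x, N' x = N x) /\ (forall x, after eta N' x = after eta N x)) /\
  (* 3 *)
  (stabilizable eta ->
     ~ exists T'' : procedure d,
         toppling_procedure T'' /\ legal T'' /\ ~ finite_for T'' eta) /\
  (* 4 *)
  (stabilizing_for T eta ->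
     forall N, final_counts T eta N -> exists x, N x = 0%N).
Proof.
move=> dp HT HT' HL HL' FT FT'.
split.
  move=> [_ [_ Hs]] N N' HN HN'.
  exact: (bound_by_stable dp HT' HL' (Hs N HN) HN').
split.
  move=> [_ [_ Hs]] [_ [_ Hs']] N N' HN HN'.
  have e : forall x, N' x = N x.
    move=> x; apply/eqP; rewrite eqn_leq.
    rewrite (bound_by_stable dp HT' HL' (Hs N HN) HN').
    by rewrite (bound_by_stable dp HT HL (Hs' N' HN') HN).
  split=> // x.
  by have -> : N' = N by apply: functional_extensionality.
split.
  move=> [T0 [HT0 [HL0 [_ [FT0 Hs0]]]]] [T'' [HT'' [HL'' nF]]].
  pose N x := proj1_sig (constructive_indefinite_description _ (FT0 x)).
  have HN : final_counts T0 eta N.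
    move=> x; exact: (proj2_sig (constructive_indefinite_description _ (FT0 x))).
  apply: nF => x.
  have [H0 [Hmono _]] := HT'' eta.
  apply: (bounded_finite (B := N x)); first exact: Hmono.
  move=> s hs; exact: (least_action dp HT'' HL'' (Hs0 N HN)).
move=> [_ [_ Hs]] N HN.
apply: NNPP => hn.
have pos : forall x, (0 < N x)%N.
  move=> x; case: (posnP (N x)) => // h; exfalso; apply: hn; by exists x.
pose M x := (N x).-1.
have eM : forall x, after eta M x = after eta N x.
  move=> x; rewrite /after /laplacian /nb_sum /M.
  have e1 : forall i : 'I_d, ((N (shift x i 1)).-1 + (N (shift x i (-1))).-1 + 2
       = N (shift x i 1) + N (shift x i (-1)))%N.
    move=> i; have := pos (shift x i 1); have := pos (shift x i (-1)); lia.
  have e2 : (\sum_(i < d) ((N (shift x i 1)).-1 + (N (shift x i (-1))).-1) + 2 * d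
       = \sum_(i < d) (N (shift x i 1) + N (shift x i (-1))))%N.
    by rewrite -(eq_bigr _ (fun i _ => e1 i)) !big_split /= big_const_ord iter_addn_0 mulnC.
  have e3 : ((N x).-1 + 1 = N x)%N by have := pos x; lia.
  move: e2 e3.
  move: (N x).-1 (\sum_(i < d) ((N (shift x i 1)).-1 + (N (shift x i (-1))).-1))%N
        (\sum_(i < d) (N (shift x i 1) + N (shift x i (-1))))%N (N x) (eta x) => a b c e f.
  lia.
have HsM : stable (after eta M) by move=> x; rewrite eM; apply: Hs.
pose x0 : site d := [ffun _ => 0%R].
have [s [hs e]] := lim_eventually (HN x0).
have := least_action dp HT HL HsM x0 hs.
rewrite e /M; have := pos x0; lia.
Qed.
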